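(* Let $\mathbf{A}\in\mathbb{R}^{3\times 3}$ and let $\mathbf{A}=\mathbf{U}\mathbf{S}\mathbf{V}^T$ be its proper singular value decomposition, with $\mathbf{S}=\operatorname{diag}(s_1,s_2,s_3)$. Let $\mathbf{R}\in\mathrm{SO}(3)$ be a random rotation following the Rotation Laplace distribution $\mathcal{RL}(\mathbf{A})$, i.e. with density with respect to the normalized Haar measure $\mathrm{d}\mathbf{R}$ on $\mathrm{SO}(3)$ $$p(\mathbf{R};\mathbf{A})=\frac{1}{F(\mathbf{A})}\,\frac{\exp\left(-\sqrt{\operatorname{tr}(\mathbf{S}-\mathbf{A}^T\mathbf{R})}\right)}{\sqrt{\operatorname{tr}(\mathbf{S}-\mathbf{A}^T\mathbf{R})}},$$ where $F(\mathbf{A})$ is the normalizing constant. Let $\mathbf{R}_0=\mathbf{U}\mathbf{V}^T$ be the mode of this distribution, set $\widetilde{\mathbf{R}}=\mathbf{R}_0^T\mathbf{R}$, $\boldsymbol{\Phi}=\log\widetilde{\mathbf{R}}\in\mathfrak{so}(3)$ and $\boldsymbol{\phi}=\boldsymbol{\Phi}^\vee\in\mathbb{R}^3$. Then, when $\|\mathbf{R}-\mathbf{R}_0\|\to 0$, $\boldsymbol{\phi}$ follows a zero-mean (three-dimensional) multivariate Laplace distribution; that is, the probability $p(\mathbf{R})\,\mathrm{d}\mathbf{R}$ expressed in the coordinates $\boldsymbol{\phi}$ agrees, up to a factor $1+O(\|\boldsymbol{\phi}\|^2)$ as $\boldsymbol{\phi}\to\mathbf{0}$, with a density proportional to the zero-mean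 multivariate Laplace density $\frac{\exp(-\sqrt{2\boldsymbol{\phi}^T\boldsymbol{\Sigma}^{-1}\boldsymbol{\phi}})}{\sqrt{\boldsymbol{\phi}^T\boldsymbol{\Sigma}^{-1}\boldsymbol{\phi}}}\,\mathrm{d}\boldsymbol{\phi}$ for some covariance matrix $\boldsymbol{\Sigma}$.
   Context: Proper SVD: if $\mathbf{A}=\mathbf{U}'\mathbf{S}'(\mathbf{V}')^T$ is an ordinary SVD with $\mathbf{S}'=\operatorname{diag}(s_1',s_2',s_3')$, set $\mathbf{U}=\mathbf{U}'\operatorname{diag}(1,1,\det\mathbf{U}')$, $\mathbf{V}=\mathbf{V}'\operatorname{diag}(1,1,\det\mathbf{V}')$, $\mathbf{S}=\operatorname{diag}(s_1',s_2',\det(\mathbf{U}'\mathbf{V}')s_3')$, so that $\mathbf{U},\mathbf{V}\in\mathrm{SO}(3)$ and $\mathbf{A}=\mathbf{U}\mathbf{S}\mathbf{V}^T$. The Haar measure $\mathrm{d}\mathbf{R}$ on $\mathrm{SO}(3)$ is normalized so that $\int_{\mathrm{SO}(3)}\mathrm{d}\mathbf{R}=1$. $\mathfrak{so}(3)$ is the space of $3\times3$ skew-symmetric matrices; the vee map $\vee$ sends $\begin{pmatrix}0&-\phi_z&\phi_y\\ \phi_z&0&-\phi_x\\ -\phi_y&\phi_x&0\end{pmatrix}$ to $(\phi_x,\phi_y,\phi_z)^T$, and hat $\wedge$ is its inverse. $\exp(\hat{\boldsymbol\phi})=\mathbf{I}+\frac{\sin\theta}{\theta}\hat{\boldsymbol\phi}+\frac{1-\cos\theta}{\theta^2}\hat{\boldsymbol\phi}^2$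 with $\theta=\|\boldsymbol\phi\|$, and $\log\mathbf{R}=\frac{\theta}{2\sin\theta}(\mathbf{R}-\mathbf{R}^T)$ with $\theta=\arccos\frac{\operatorname{tr}\mathbf{R}-1}{2}$. The zero-mean three-dimensional multivariate Laplace distribution with covariance $\boldsymbol\Sigma$ has density on $\mathbb{R}^3$ proportional to $\exp(-\sqrt{2\mathbf{x}^T\boldsymbol\Sigma^{-1}\mathbf{x}})/\sqrt{\mathbf{x}^T\boldsymbol\Sigma^{-1}\mathbf{x}}$. *)

(* Defs.v *)
From HB Require Import structures.
From mathcomp Require Import all_boot all_order all_algebra.
From mathcomp Require Import reals sequences exp trigo.
Set Implicit Arguments. Unset Strict Implicit. Unset Printing Implicit Defensive.
Import Order.TTheory GRing.Theory Num.Theory.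
Local Open Scope ring_scope.

Section Defs.
Variable R : realType.

Definition is_rot (M : 'M[R]_3) : Prop := M^T *m M = 1%:M /\ \det M = 1.

Definition vnorm (x : 'cV[R]_3) : R := Num.sqrt ((x^T *m x) 0 0).

Definition hat (p : 'cV[R]_3) : 'M[R]_3 :=
  \matrix_(i < 3, j < 3)
    (nth [::] [:: [:: 0; - p 2%:R 0; p 1%:R 0];
        [:: p 2%:R 0; 0; - p 0 0];
        [:: - p 1%:R 0; p 0 0; 0]] i)`_j.

Definition vee (M : 'M[R]_3) : 'cV[R]_3 :=
  \col_(i < 3) [:: M 2%:R 1%:R; M 0 2%:R; M 1%:R 0]`_i.

Definition logm (M : 'M[R]_3) : 'M[R]_3 :=
  let theta := acos ((\tr M - 1) / 2) in (theta / (2 * sin theta)) *: (M - M^T).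

Definition rl_kernel (A S M : 'M[R]_3) : R :=
  let t := \tr (S - A^T *m M) in expR (- Num.sqrt t) / Num.sqrt t.

(* Density of the normalized Haar measure dR of SO(3) in exponential coordinates
   R = R0 exp(hat phi), |phi| < pi :  dR = (1 - cos|phi|) / (4 pi^2 |phi|^2) dphi. *)
Definition haar_exp_density (p : 'cV[R]_3) : R :=
  (1 - cos (vnorm p)) / (4 * pi ^+ 2 * vnorm p ^+ 2).

Definition qform (M : 'M[R]_3) (x : 'cV[R]_3) : R := (x^T *m M *m x) 0 0.

Definition laplace_kernel (Sigma : 'M[R]_3) (x : 'cV[R]_3) : R :=
  expR (- Num.sqrt (2 * qform (invmx Sigma) x)) / Num.sqrt (qform (invmx Sigma) x).

Definition spd (M : 'M[R]_3) : Prop :=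
  M^T = M /\ forall x : 'cV[R]_3, x != 0 -> 0 < qform M x.
End Defs.

(* Main.v *)
Require Import Defs.
From HB Require Import structures.
From mathcomp Require Import all_boot all_order all_algebra.
From mathcomp Require Import reals sequences exp trigo.
From mathcomp Require Import ring lra.
From mathcomp Require Import classical_sets functions boolp interval_inference topology normedtype derive realfun.
Import Order.TTheory GRing.Theory Num.Theory.
Local Open Scope ring_scope.

Section C.
Import numFieldNormedType.Exports.
Local Open Scope classical_set_scope.
Variable R : realType.

Lemma mono0 (f df : R -> R) :
  (forall x : R, is_derive x (1:R) f (df x)) -> (forall x, 0 <= x -> 0 <= df x) ->
  forall x, 0 <= x -> f 0 <= f x.
Proof.
move=> hd hp x x0.
have cf : {within `[0, x], continuous f}.
  apply: derivable_within_continuous => y _.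
  by have [] := hd y.
have [c cin] := MVT_segment x0 (fun y _ => hd y) cf.
move/eqP; rewrite subr_eq => /eqP ->.
rewrite lerDr mulr_ge0 ?subr_ge0 ?hp //.
by move: cin; rewrite in_itv /= => /andP[].
Qed.

Lemma sin_lex (x : R) : 0 <= x -> sin x <= x.
Proof.
move=> x0.
have H1 : forall y : R, is_derive y (1:R) (fun y => y - sin y) (1 - cos y).
  move=> y. exact: (is_deriveB (is_derive_id y 1) (is_derive_sin y)).
have H2 : forall y : R, 0 <= y -> 0 <= 1 - cos y.
  by move=> y _; rewrite subr_ge0 cos_le1.
have := @mono0 _ _ H1 H2 x x0.
by rewrite /= sin0 subrr subr_ge0.
Qed.


Lemma cos_ge (x : R) : 0 <= x -> 1 - x ^+ 2 / 2 <= cos x.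
Proof.
move=> x0.
have H1 : forall y : R, is_derive y (1:R) (fun y => cos y + 2^-1 * (y * y)) (y - sin y).
  move=> y. eapply is_derive_eq; [exact (is_deriveD (is_derive_cos y) (is_deriveZ 2^-1 (is_deriveM (is_derive_id y 1) (is_derive_id y 1))))|].
  rewrite /= /GRing.scale /=. lra.
have H2 : forall y : R, 0 <= y -> 0 <= y - sin y.
  by move=> y y0; rewrite subr_ge0 sin_lex.
have := @mono0 _ _ H1 H2 x x0.
rewrite /= cos0. lra.
Qed.

Lemma sin_ge (x : R) : 0 <= x -> x - x ^+ 3 / 6 <= sin x.
Proof.
move=> x0.
have H1 : forall y : R, is_derive y (1:R) (fun y => sin y - y + 6^-1 * (y * y * y)) (cos y - 1 + y ^+ 2 / 2).
  move=> y. eapply is_derive_eq; [exact (is_deriveD (is_deriveB (is_derive_sin y) (is_derive_id y 1)) (is_deriveZ 6^-1 (is_deriveM (is_deriveM (is_derive_id y 1) (is_derive_id y 1)) (is_derive_id y 1))))|].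
  rewrite /= /GRing.scale /=. rewrite !fctE /=. by field.
have H2 : forall y : R, 0 <= y -> 0 <= cos y - 1 + y ^+ 2 / 2.
  by move=> y y0; have := @cos_ge y y0; lra.
have := @mono0 _ _ H1 H2 x x0.
rewrite /= sin0. lra.
Qed.

Lemma cos_le (x : R) : 0 <= x -> cos x <= 1 - x ^+ 2 / 2 + x ^+ 4 / 24.
Proof.
move=> x0.
have H1 : forall y : R, is_derive y (1:R) (fun y => 24^-1 * (y * y * y * y) - 2^-1 * (y * y) - cos y) (sin y - y + y ^+ 3 / 6).
  move=> y. eapply is_derive_eq; [exact (is_deriveB (is_deriveB (is_deriveZ 24^-1 (is_deriveM (is_deriveM (is_deriveM (is_derive_id y 1) (is_derive_id y 1)) (is_derive_id y 1)) (is_derive_id y 1))) (is_deriveZ 2^-1 (is_deriveM (is_derive_id y 1) (is_derive_id y 1)))) (is_derive_cos y))|].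
  rewrite /= /GRing.scale /=. rewrite !fctE /=. by field.
have H2 : forall y : R, 0 <= y -> 0 <= sin y - y + y ^+ 3 / 6.
  by move=> y y0; have := @sin_ge y y0; lra.
have := @mono0 _ _ H1 H2 x x0.
rewrite /= cos0. lra.
Qed.

End C.

Section S.
Variable R : realType.

Lemma expR_le12 (X : R) : 0 <= X -> X <= 1/2 -> expR X <= 1 + 2 * X.
Proof.
move=> X0 X1.
have h1 := expR_ge1Dx (- X).
have h2 : expR X * expR (- X) = 1 by rewrite -expRD subrr expR0.
have h3 := expR_gt0 X.
nra.
Qed.

Lemma scalar_main (s1 s2 s3 F t y0 y1 y2 n0 n1 n2 Z2 c th k rho T P c0 : R) :
 s2 <= s1 -> `|s3| <= s2 -> 0 < s2 + s3 -> 0 < F ->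
 Z2 = y0 ^+ 2 + y1 ^+ 2 + y2 ^+ 2 ->
 (t + 1) * (2 * n0 - 2) = y0 ^+ 2 - Z2 ->
 (t + 1) * (2 * n1 - 2) = y1 ^+ 2 - Z2 ->
 (t + 1) * (2 * n2 - 2) = y2 ^+ 2 - Z2 ->
 Z2 = (t + 1) * (3 - t) ->
 c = (t - 1) / 2 -> th = acos c -> k = th / (2 * sin th) ->
 rho = Num.sqrt (k ^+ 2 * Z2) ->
 0 < rho < (1 + (s1 + s2))^-1 ->
 T = s1 * (1 - n0) + s2 * (1 - n1) + s3 * (1 - n2) ->
 P = k ^+ 2 * ((s2 + s3) * y0 ^+ 2 + (s1 + s3) * y1 ^+ 2 + (s1 + s2) * y2 ^+ 2) / 4 ->
 c0 = (8 * pi ^+ 2 * F * Num.sqrt 2)^-1 ->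
 `| expR (- Num.sqrt T) / Num.sqrt T / F * ((1 - cos rho) / (4 * pi ^+ 2 * rho ^+ 2))
    - c0 * (expR (- Num.sqrt (2 * P)) / Num.sqrt P) |
 <= 1 * rho ^+ 2 * (c0 * (expR (- Num.sqrt (2 * P)) / Num.sqrt P)).
Proof.
move=> h21 h32 h23 hF eZ2 e0 e1 e2 eZ ec eth ek erho' hrho eT eP ec0.
have s3a : - s2 <= s3 /\ s3 <= s2 by move: h32; rewrite ler_norml => /andP[].
have Z2ge0 : 0 <= Z2 by rewrite eZ2; have := sqr_ge0 y0; have := sqr_ge0 y1; have := sqr_ge0 y2; lra.
have tb : -1 <= t <= 3 by apply/andP; split; nra.
have cb : c \in `[-1, 1] by rewrite in_itv /=; apply/andP; split; rewrite ec; lra.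
have cbb : -1 <= c <= 1 by apply/andP; split; rewrite ec; lra.
have eZ' : Z2 = 4 * (1 - c ^+ 2) by rewrite eZ ec; field.
have hsin : sin th = Num.sqrt (1 - c ^+ 2) by rewrite eth sin_acos.
have hcos : cos th = c by rewrite eth acosK.
have sge0 : 0 <= sin th by rewrite hsin sqrtr_ge0.
have s2e : sin th ^+ 2 = 1 - c ^+ 2 by rewrite hsin sqr_sqrtr //; nra.
have sgt0 : 0 < sin th.
  rewrite lt_def sge0 andbT; apply/negP => /eqP s0.
  move: hrho; rewrite erho' ek s0 mulr0 invr0 mulr0 expr0n /= mul0r sqrtr0 ltxx.
  by [].
have c1 : -1 < c < 1 by apply/andP; split; nra.
have thgt0 : 0 < th by rewrite eth acos_gt0 //; lra.
have erho : rho = th.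
  rewrite erho' (_ : k ^+ 2 * Z2 = th ^+ 2); first by rewrite sqrtr_sqr ger0_norm // ltW.
  rewrite eZ' -s2e ek; field; lra.
rewrite erho hcos.
move: hrho; rewrite erho => /andP[_ thd].
have d2p : 0 < s1 + s2 by lra.
have thd' : th * (1 + (s1 + s2)) < 1.
  by rewrite -(ltr_pdivlMr _ _ (_ : 0 < 1 + (s1 + s2))) ?mul1r //; lra.
have th1 : th < 1 by nra.
have cge := @cos_ge _ th (ltW thgt0). have cle := @cos_le _ th (ltW thgt0).
rewrite hcos in cge cle.
set Y := (s2 + s3) * y0 ^+ 2 + (s1 + s3) * y1 ^+ 2 + (s1 + s2) * y2 ^+ 2 in eP.
have eY : Y = 2 * (t + 1) * T.
  rewrite /Y eT.
  have := f_equal (fun x => s1 * x) e0; have := f_equal (fun x => s2 * x) e1;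
  have := f_equal (fun x => s3 * x) e2; rewrite eZ2 /= => f2 f1 f0.
  lra.
have yq0 := sqr_ge0 y0; have yq1 := sqr_ge0 y1; have yq2 := sqr_ge0 y2.
have Ylo : (s2 + s3) * Z2 <= Y.
  rewrite /Y eZ2.
  have : 0 <= (s1 - s2) * y1 ^+ 2 by apply: mulr_ge0; lra.
  have : 0 <= (s1 - s3) * y2 ^+ 2 by apply: mulr_ge0; lra.
  lra.
have Yhi : Y <= (s1 + s2) * Z2.
  rewrite /Y eZ2.
  have : 0 <= (s2 - s3) * y1 ^+ 2 by apply: mulr_ge0; lra.
  have : 0 <= (s1 - s3) * y0 ^+ 2 by apply: mulr_ge0; lra.
  lra.
have Z2pos : 0 < Z2 by rewrite eZ'; nra.
have Ypos : 0 < Y by nra.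
have tp : 0 < t + 1 by rewrite ec in c1; lra.
have eT' : T = Y / (4 * (1 + c)) by rewrite eY ec; field; lra.
have Tpos : 0 < T by rewrite eT'; apply: divr_gt0 => //; lra.
have Thi : T <= (s1 + s2) * (1 - c).
  rewrite eT' ler_pdivrMr; last by lra.
  rewrite eZ' in Yhi; nra.
have T1 : T <= 1.
  have : (s1 + s2) * (1 - c) <= (s1 + s2) * (th ^+ 2 / 2) by apply: ler_wpM2l; lra.
  nra.
set g := 2 * (1 - c) / th ^+ 2.
have thsq : 0 < th ^+ 2 by apply: exprn_gt0.
have gle1 : g <= 1 by rewrite /g ler_pdivrMr //; lra.
have gge : 1 - th ^+ 2 / 12 <= g.
  rewrite /g ler_pdivlMr //.
  have e4 : th ^+ 4 = th ^+ 2 * th ^+ 2 by rewrite -exprD.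
  rewrite e4 in cle.
  nra.
have gpos : 0 < g by nra.
have eP' : P = T / (2 * g).
  rewrite eP eT' ek /g -/Y.
  have sne : sin th != 0 by apply/lt0r_neq0.
  apply: (@mulIf _ (sin th ^+ 2)); first by rewrite expf_neq0.
  rewrite [in RHS]s2e. field. apply/and4P; split => //; apply: lt0r_neq0 => //; lra.
set a := Num.sqrt T. set b := Num.sqrt g. set q := Num.sqrt (2 : R).
have apos : 0 < a by rewrite sqrtr_gt0.
have bpos : 0 < b by rewrite sqrtr_gt0.
have qpos : 0 < q by rewrite sqrtr_gt0.
have a2 : a ^+ 2 = T by rewrite sqr_sqrtr // ltW.
have b2 : b ^+ 2 = g by rewrite sqr_sqrtr // ltW.
have q2 : q ^+ 2 = 2 by rewrite sqr_sqrtr.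
have sP : Num.sqrt P = a / (b * q).
  rewrite (_ : P = (a / (b * q)) ^+ 2) ?sqrtr_sqr ?ger0_norm //.
    by apply: divr_ge0; [apply: ltW | apply: mulr_ge0; apply: ltW].
  rewrite eP' -a2 -b2 expr_div_n exprMn q2; field.
  by apply: lt0r_neq0.
have s2P : Num.sqrt (2 * P) = a / b.
  rewrite (_ : 2 * P = (a / b) ^+ 2) ?sqrtr_sqr ?ger0_norm //.
    by apply: divr_ge0; apply: ltW.
  rewrite eP' -a2 -b2 expr_div_n; field.
  by apply: lt0r_neq0.
have hg : (1 - c) / (4 * pi ^+ 2 * th ^+ 2) = b ^+ 2 / (8 * pi ^+ 2).
  have := pi_gt0 R; move: (pi : R) => PI PIpos.
  rewrite b2 /g; field.
  by apply/andP; split; apply: lt0r_neq0.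
rewrite sP s2P hg.
have b1 : b <= 1 by clear -b2 gle1 bpos; nra.
have bg : g <= b by clear -b2 b1 bpos; nra.
have a1 : a <= 1 by clear -a2 T1 apos; nra.
set X := a / b - a.
have eX : X * b = a * (1 - b) by rewrite /X; field; apply: lt0r_neq0.
have X0 : 0 <= X by clear -eX bpos b1 apos; nra.
have th2 : th ^+ 2 < 1 by clear -th1 thgt0; nra.
have Xb : X <= th ^+ 2 / 11 by clear -eX a1 apos bg gge b1 X0 th2 thgt0; nra.
have Xh : X <= 1/2 by clear -Xb th2; lra.
have w1 := expR_ge1Dx X.
have w2 := @expR_le12 X X0 Xh.
have evw : expR (- (a / b)) * expR X = expR (- a) by rewrite -expRD /X; congr expR; ring.
set u := expR (- a) in evw *. set v := expR (- (a / b)) in evw *. set w := expR X in w1 w2 evw.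
have vpos : 0 < v by apply: expR_gt0.
have pip : 0 < pi ^+ 2 :> R by apply: exprn_gt0; apply: pi_gt0.
set cL := c0 * (v / (a / (b * q))).
have cLpos : 0 < cL.
  rewrite /cL ec0; apply: mulr_gt0; first by rewrite invr_gt0; apply: mulr_gt0 => //; apply: mulr_gt0 => //; apply: mulr_gt0.
  apply: divr_gt0 => //; apply: divr_gt0 => //; exact: mulr_gt0.
have -> : u / a / F * (b ^+ 2 / (8 * pi ^+ 2)) = cL * (b * w).
  rewrite /cL ec0 -/q -evw.
  have := pi_gt0 R; move: (pi : R) => PI PIpos.
  field.
  by apply/and5P; split; apply: lt0r_neq0.
rewrite -[X in `|X - _|]/(cL * (b * w)) -{2}(mulr1 cL) -mulrBr normrM gtr0_norm // mulrC.
rewrite mul1r ler_pM2r //.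

have wpos : 0 < w by apply: expR_gt0.
have wge1 : 1 <= w by lra.
have bw1 : b <= b * w by rewrite -{1}(mulr1 b) ler_wpM2l // ltW.
have bw2 : b * w <= w by rewrite -{2}(mul1r w) ler_wpM2r // ltW.
rewrite ler_norml; apply/andP; split; lra.
Qed.
End S.

Section M.
Variable R : realType.

Definition mk3 (a b c d e f g h i : R) : 'M[R]_3 :=
  \matrix_(p < 3, q < 3) nth 0 (nth [::] [:: [:: a;b;c]; [:: d;e;f]; [:: g;h;i]] p) q.

Lemma mk3E (M : 'M[R]_3) : M = mk3 (M 0 0) (M 0 1) (M 0 2%:R) (M 1 0) (M 1 1) (M 1 2%:R) (M 2%:R 0) (M 2%:R 1) (M 2%:R 2%:R).
Proof.
apply/matrixP => i j; rewrite mxE.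
by case: i => [[|[|[|?]]] ?]; case: j => [[|[|[|?]]] ?] //=; congr (M _ _); apply: val_inj.
Qed.

Lemma det3 (a b c d e f g h i : R) :
  \det (mk3 a b c d e f g h i) = a * (e * i - f * h) - b * (d * i - f * g) + c * (d * h - e * g).
Proof.
rewrite (expand_det_row _ 0) !big_ord_recr big_ord0 /= /cofactor.
rewrite !(expand_det_row _ 0) !big_ord_recr big_ord0 /= /cofactor !det_mx11 !mxE /=.
rewrite !big_ord0 /= ?add0n ?expr0 ?expr1. ring.
Qed.

Lemma adj3 (a b c d e f g h i : R) :
  \adj (mk3 a b c d e f g h i) = mk3 (e*i - f*h) (-(b*i - c*h)) (b*f - c*e)
     (-(d*i - f*g)) (a*i - c*g) (-(a*f - c*d)) (d*h - e*g) (-(a*h - b*g)) (a*e - b*d).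
Proof.
apply/matrixP => p q; rewrite !mxE /cofactor.
case: p => [[|[|[|?]]] ?] //; case: q => [[|[|[|?]]] ?] //=;
rewrite (expand_det_row _ 0) !big_ord_recr big_ord0 /= /cofactor !det_mx11 !mxE /= ?add0n ?addn0 ?expr0 ?expr1 /=; ring.
Qed.

Ltac expl H :=
  let h00 := fresh "h" in let h01 := fresh "h" in let h02 := fresh "h" in
  let h10 := fresh "h" in let h11 := fresh "h" in let h12 := fresh "h" in
  let h20 := fresh "h" in let h21 := fresh "h" in let h22 := fresh "h" in
  have h00 := H 0 0; have h01 := H 0 1; have h02 := H 0 2%:R;
  have h10 := H 1 0; have h11 := H 1 1; have h12 := H 1 2%:R;
  have h20 := H 2%:R 0; have h21 := H 2%:R 1; have h22 := H 2%:R 2%:R;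
  rewrite ?mxE ?big_ord_recr ?big_ord0 /= ?mxE /= in h00 h01 h02 h10 h11 h12 h20 h21 h22;
  clear H.

Lemma rotR1_mk (a b c d e f g h i : R) :
  let M := mk3 a b c d e f g h i in
  M^T *m M = 1%:M -> M *m M^T = 1%:M -> \adj M = M^T ->
  (\tr M + 1) *: (M + M^T - 2%:M) = (M - M^T) *m (M - M^T).
Proof.
move=> M; rewrite /M adj3 => /matrixP H1 /matrixP H2 /matrixP H3.
expl H1. expl H2. expl H3.
apply/matrixP => p q.
rewrite /mxtrace ?mxE ?big_ord_recr ?big_ord0 /= ?mxE /=.
case: p => [[|[|[|?]]] ?] //; case: q => [[|[|[|?]]] ?] //=.
all: lra.
Qed.

Lemma rot_adj (M : 'M[R]_3) : is_rot M -> \adj M = M^T.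
Proof.
move=> [h1 h2].
have h3 : M *m M^T = 1%:M by apply: mulmx1C.
by rewrite -[\adj M]mul1mx -h1 -mulmxA mul_mx_adj h2 mulmx1.
Qed.

Lemma rotR1 (M : 'M[R]_3) : is_rot M ->
  (\tr M + 1) *: (M + M^T - 2%:M) = (M - M^T) *m (M - M^T).
Proof.
move=> hM; have [h1 _] := hM.
have h3 : M *m M^T = 1%:M by apply: mulmx1C.
have h4 := @rot_adj M hM.
move: h1 h3 h4; rewrite [M]mk3E; exact: rotR1_mk.
Qed.

Definition mkc (a b c : R) : 'cV[R]_3 := \col_(p < 3) nth 0 [:: a; b; c] p.

Lemma mkcE (y : 'cV[R]_3) : y = mkc (y 0 0) (y 1 0) (y 2%:R 0).
Proof.
apply/matrixP => i j; rewrite mxE.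
by case: i => [[|[|[|?]]] ?]; case: j => [[|?] ?] //=; congr (y _ _); apply: val_inj.
Qed.

Lemma vee_mk (a b c d e f g h i : R) : vee (mk3 a b c d e f g h i) = mkc h c d.
Proof. by apply/matrixP => p q; rewrite !mxE; case: p => [[|[|[|?]]] ?]. Qed.

Lemma skew_sq (M : 'M[R]_3) :
  (M - M^T) *m (M - M^T) = vee (M - M^T) *m (vee (M - M^T))^T
     - ((vee (M - M^T))^T *m vee (M - M^T)) 0 0 *: 1%:M.
Proof.
rewrite [M]mk3E.
set a := M 0 0. set b := M 0 1. set c := M 0 2%:R. set d := M 1 0. set e := M 1 1.
set f := M 1 2%:R. set g := M 2%:R 0. set h := M 2%:R 1. set i := M 2%:R 2%:R.
have -> : mk3 a b c d e f g h i - (mk3 a b c d e f g h i)^T =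
   mk3 0 (b - d) (c - g) (d - b) 0 (f - h) (g - c) (h - f) 0.
  by apply/matrixP => p q; rewrite !mxE; case: p => [[|[|[|?]]] ?]; case: q => [[|[|[|?]]] ?] //=; ring.
rewrite vee_mk.
apply/matrixP => p q.
rewrite !mxE ?big_ord_recr ?big_ord0 /= ?mxE /=.
case: p => [[|[|[|?]]] ?] //; case: q => [[|[|[|?]]] ?] //=; ring.
Qed.

Lemma vee_scale (k : R) (X : 'M[R]_3) : vee (k *: X) = k *: vee X.
Proof. by apply/matrixP => p q; rewrite !mxE; case: p => [[|[|[|?]]] ?]. Qed.

Lemma qdiag (y : 'cV[R]_3) (a b c : R) :
  (y^T *m diag_mx (\row_(i < 3) [:: a; b; c]`_i) *m y) 0 0
   = a * y 0 0 ^+ 2 + b * y 1 0 ^+ 2 + c * y 2%:R 0 ^+ 2.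
Proof.
rewrite [y]mkcE !mxE; do 3 rewrite ?big_ord_recr ?big_ord0 /= ?mxE /=.
ring.
Qed.

Lemma sq3 (y : 'cV[R]_3) :
  (y^T *m y) 0 0 = y 0 0 ^+ 2 + y 1 0 ^+ 2 + y 2%:R 0 ^+ 2.
Proof.
rewrite [y]mkcE !mxE; do 3 rewrite ?big_ord_recr ?big_ord0 /= ?mxE /=.
ring.
Qed.

Lemma trdiag (N : 'M[R]_3) (a b c : R) :
  \tr (diag_mx (\row_(i < 3) [:: a; b; c]`_i) - diag_mx (\row_(i < 3) [:: a; b; c]`_i) *m N)
  = a * (1 - N 0 0) + b * (1 - N 1 1) + c * (1 - N 2%:R 2%:R).
Proof.
rewrite [N]mk3E /mxtrace !mxE ?big_ord_recr ?big_ord0 /= ?mxE /=.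
rewrite ?big_ord_recr ?big_ord0 /= ?mxE /=.
ring.
Qed.

End M.

Section T.
Variable R : realType.

Lemma diag_entry (N : 'M[R]_3) (y : 'cV[R]_3) (a Z : R) (i : 'I_3) :
  a *: (N + N^T - 2%:M) = y *m y^T - Z *: 1%:M -> a * (2 * N i i - 2) = y i 0 ^+ 2 - Z.
Proof.
move/matrixP/(_ i i); rewrite !mxE big_ord1 !mxE eqxx /=.
have e0 : (ord0 : 'I_1) = 0 by apply: val_inj.
rewrite e0 => h; rewrite expr2 -[Z]mulr1 -h; ring.
Qed.

Lemma tr3 (N : 'M[R]_3) : \tr N = N 0 0 + N 1 1 + N 2%:R 2%:R.
Proof.
rewrite [N]mk3E /mxtrace !mxE; do 3 rewrite ?big_ord_recr ?big_ord0 /= ?mxE /=.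
ring.
Qed.

Lemma conjV (V M : 'M[R]_3) (a : R) : V^T *m V = 1%:M ->
  V^T *m (a *: (M + M^T - 2%:M)) *m V = a *: (V^T *m M *m V + (V^T *m M *m V)^T - 2%:M).
Proof.
move=> hV.
rewrite -scalemxAr -scalemxAl; congr (_ *: _).
rewrite !trmx_mul trmxK !mulmxDr !mulmxDl ?mulmxN ?mulNmx !mulmxA.
rewrite mul_mx_scalar -scalemxAl hV scalemx1.
by rewrite -!mulmxA.
Qed.

Lemma conjV2 (V : 'M[R]_3) (z : 'cV[R]_3) (Z : R) : V^T *m V = 1%:M ->
  V^T *m (z *m z^T - Z *: 1%:M) *m V = (V^T *m z) *m (V^T *m z)^T - Z *: 1%:M.
Proof.
move=> hV.
rewrite mulmxBr mulmxBl trmx_mul trmxK !mulmxA.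
by rewrite -scalemxAr mulmx1 -scalemxAl hV.
Qed.

End T.

Lemma pos3 (R : realType) (y : 'cV[R]_3) (a b c : R) : 0 < a -> 0 < b -> 0 < c -> y != 0 ->
  0 < a * y 0 0 ^+ 2 + b * y 1 0 ^+ 2 + c * y 2%:R 0 ^+ 2.
Proof.
move=> ha hb hc hy.
have q0 := sqr_ge0 (y 0 0); have q1 := sqr_ge0 (y 1 0); have q2 := sqr_ge0 (y 2%:R 0).
have p0 : 0 <= a * y 0 0 ^+ 2 by apply: mulr_ge0 => //; apply: ltW.
have p1 : 0 <= b * y 1 0 ^+ 2 by apply: mulr_ge0 => //; apply: ltW.
have p2 : 0 <= c * y 2%:R 0 ^+ 2 by apply: mulr_ge0 => //; apply: ltW.
case: (eqVneq (y 0 0) 0) => [e0|n0]; last first.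
  have : 0 < a * y 0 0 ^+ 2 by apply: mulr_gt0 => //; rewrite exprn_even_gt0 // n0 orbT.
  lra.
case: (eqVneq (y 1 0) 0) => [e1|n1]; last first.
  have : 0 < b * y 1 0 ^+ 2 by apply: mulr_gt0 => //; rewrite exprn_even_gt0 // n1 orbT.
  lra.
case: (eqVneq (y 2%:R 0) 0) => [e2|n2]; last first.
  have : 0 < c * y 2%:R 0 ^+ 2 by apply: mulr_gt0 => //; rewrite exprn_even_gt0 // n2 orbT.
  lra.
move: hy; rewrite [y]mkcE e0 e1 e2 => /negP; case; apply/eqP/matrixP => p q.
by rewrite !mxE; case: p => [[|[|[|?]]] ?].
Qed.

Theorem proposition2 (R : realType) (A U V : 'M[R]_3) (s1 s2 s3 F : R) :
  is_rot U -> is_rot V ->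
  s2 <= s1 -> `|s3| <= s2 ->
  0 < s2 + s3 ->
  A = U *m diag_mx (\row_i [:: s1; s2; s3]`_i) *m V^T ->
  0 < F ->
  exists (Sigma : 'M[R]_3) (c K delta : R),
    spd Sigma /\ 0 < c /\ 0 < delta /\
    forall Rm : 'M[R]_3, is_rot Rm ->
      let phi := vee (logm ((U *m V^T)^T *m Rm)) in
      0 < vnorm phi < delta ->
      `| rl_kernel A (diag_mx (\row_i [:: s1; s2; s3]`_i)) Rm / F
           * haar_exp_density phi
         - c * laplace_kernel Sigma phi |
      <= K * vnorm phi ^+ 2 * (c * laplace_kernel Sigma phi).
Proof.
move=> hU hV h21 h32 h23 hA hF.
set Sd := diag_mx (\row_i [:: s1; s2; s3]`_i) in hA *.
have [hU1 hU2] := hU; have [hV1 hV2] := hV.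
have VVt : V *m V^T = 1%:M by apply: mulmx1C.
have UUt : U *m U^T = 1%:M by apply: mulmx1C.
have s3a : - s2 <= s3 /\ s3 <= s2 by move: h32; rewrite ler_norml => /andP[].
have d0p : 0 < s2 + s3 by [].
have d1p : 0 < s1 + s3 by lra.
have d2p : 0 < s1 + s2 by lra.
pose Di : 'M[R]_3 := diag_mx (\row_i [:: 4 / (s2 + s3); 4 / (s1 + s3); 4 / (s1 + s2)]`_i).
pose Dq : 'M[R]_3 := diag_mx (\row_i [:: (s2 + s3) / 4; (s1 + s3) / 4; (s1 + s2) / 4]`_i).
have DiDq : Di *m Dq = 1%:M.
  rewrite /Di /Dq mulmx_diag; apply/matrixP => p q; rewrite !mxE.
  case: p => [[|[|[|?]]] ?] //; case: q => [[|[|[|?]]] ?] //=; field; lra.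
pose Sigma := V *m Di *m V^T.
pose Q := V *m Dq *m V^T.
have SQ : Sigma *m Q = 1%:M.
  rewrite /Sigma /Q -!mulmxA (mulmxA V^T) hV1 mul1mx (mulmxA Di) DiDq mul1mx.
  exact: VVt.
have invS : invmx Sigma = Q.
  have [uS _] := mulmx1_unit SQ.
  by rewrite -[invmx Sigma]mulmx1 -SQ mulmxA mulVmx // mul1mx.
exists Sigma, (8 * pi ^+ 2 * F * Num.sqrt 2)^-1, 1, (1 + (s1 + s2))^-1.
split; last split; last split.
- split.
    by rewrite /Sigma !trmx_mul trmxK /Di tr_diag_mx mulmxA.
  move=> x hx.
  have -> : qform Sigma x = ((V^T *m x)^T *m Di *m (V^T *m x)) 0 0.
    by rewrite /qform /Sigma trmx_mul trmxK !mulmxA.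
  rewrite /Di qdiag; apply: pos3; try (apply: divr_gt0; lra).
  apply: contra hx => /eqP y0.
  by rewrite -[x]mul1mx -VVt -mulmxA y0 mulmx0.
- rewrite invr_gt0; have pp := pi_gt0 R.
  have s2p : 0 < Num.sqrt (2:R) by rewrite sqrtr_gt0.
  have p2 : 0 < pi ^+ 2 :> R by apply: exprn_gt0.
  by rewrite !mulr_gt0.
- rewrite invr_gt0; lra.
move=> Rm hR phi hphi.
have [hR1 hR2] := hR.
pose M := (U *m V^T)^T *m Rm.
have eM : M = V *m U^T *m Rm by rewrite /M trmx_mul trmxK.
have hM : is_rot M.
  split.
    rewrite eM !trmx_mul trmxK !mulmxA -(mulmxA _ V^T V) hV1 mulmx1.
    by rewrite -(mulmxA _ U U^T) UUt mulmx1 hR1.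
  by rewrite eM !det_mulmx det_tr hV2 hU2 hR2 !mulr1.
pose N := V^T *m M *m V.
have eN : N = U^T *m Rm *m V by rewrite /N eM !mulmxA hV1 mul1mx.
pose z := vee (M - M^T).
pose y := V^T *m z.
pose t := \tr M.
have E1 : (t + 1) *: (M + M^T - 2%:M) = z *m z^T - ((z^T *m z) 0 0) *: 1%:M.
  by rewrite /t rotR1 // skew_sq.
have E2 : (t + 1) *: (N + N^T - 2%:M) = y *m y^T - ((z^T *m z) 0 0) *: 1%:M.
  by rewrite /N -conjV // E1 conjV2.
have eZ : (z^T *m z) 0 0 = (y^T *m y) 0 0.
  by rewrite /y trmx_mul trmxK !mulmxA -(mulmxA _ V V^T) VVt mulmx1.
rewrite eZ sq3 in E2.
have e0 := @diag_entry R _ _ _ _ 0 E2. have e1 := @diag_entry R _ _ _ _ 1 E2. have e2 := @diag_entry R _ _ _ _ 2%:R E2.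
have trN : N 0 0 + N 1 1 + N 2%:R 2%:R = t.
  by rewrite -tr3 /N mxtrace_mulC !mulmxA VVt mul1mx.
have eT : \tr (Sd - A^T *m Rm) = s1 * (1 - N 0 0) + s2 * (1 - N 1 1) + s3 * (1 - N 2%:R 2%:R).
  rewrite -trdiag -/Sd !linearB /=; congr (_ - _).
  rewrite hA !trmx_mul trmxK /Sd tr_diag_mx -/Sd eN.
  by rewrite -!mulmxA mxtrace_mulC !mulmxA.
pose c := (t - 1) / 2.
pose th := acos c.
pose k := th / (2 * sin th).
have ephi : phi = k *: z by rewrite /phi /logm /= vee_scale.
have eVn : vnorm phi = Num.sqrt (k ^+ 2 * (y^T *m y) 0 0).
  rewrite /vnorm ephi -eZ; congr Num.sqrt.
  rewrite linearZ /= [(k *: z)^T]linearZ /= -scalemxAl !mxE; ring.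
have eP : qform (invmx Sigma) phi = k ^+ 2 * ((s2 + s3) * y 0 0 ^+ 2 + (s1 + s3) * y 1 0 ^+ 2 + (s1 + s2) * y 2%:R 0 ^+ 2) / 4.
  rewrite /qform invS ephi.
  have -> : (k *: z)^T *m Q *m (k *: z) = (k ^+ 2) *: (z^T *m Q *m z).
    by rewrite linearZ /= [(k *: z)^T]linearZ /= -!scalemxAl scalerA expr2.
  have -> : z^T *m Q *m z = y^T *m Dq *m y.
    by rewrite /Q /y trmx_mul trmxK !mulmxA.
  rewrite mxE /Dq qdiag; by field.
rewrite sq3 in eVn.
rewrite /rl_kernel /haar_exp_density /laplace_kernel /=.
apply: (@scalar_main R s1 s2 s3 F t (y 0 0) (y 1 0) (y 2%:R 0) (N 0 0) (N 1 1) (N 2%:R 2%:R)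
   ((y 0 0) ^+ 2 + (y 1 0) ^+ 2 + (y 2%:R 0) ^+ 2) c th k (vnorm phi) _ _ _ h21 h32 h23 hF erefl e0 e1 e2 _ erefl erefl erefl eVn _ eT eP erefl).
- have hs : (t + 1) * (2 * N 0 0 - 2) + (t + 1) * (2 * N 1 1 - 2) + (t + 1) * (2 * N 2%:R 2%:R - 2)
     = (t + 1) * (2 * (N 0 0 + N 1 1 + N 2%:R 2%:R) - 6) by ring.
  rewrite trN e0 e1 e2 in hs.
  lra.
- exact: hphi.
Qed.
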